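(* Let $n\ge2$, $\mathbf{q}\in\mathbb{R}^n$ and $1/n<t<1$. Then there exists a maximizer $\mathbf{p}^*$ of $\mathbf{p}\cdot\mathbf{q}$ over $P(t)$ with $\mathbf{p}^*\cdot\mathbf{p}^*=t$. Consequently, $\max_{\mathbf{p}\in P(t)}\mathbf{p}\cdot\mathbf{q}=\max\{\mathbf{p}\cdot\mathbf{q}:\mathbf{p}\ge0,\ \sum_i\mathbf{p}_i=1,\ \mathbf{p}\cdot\mathbf{p}=t\}$.
   Context: $P(t)=\{\mathbf{p}\in\mathbb{R}^n:\mathbf{p}\ge0,\ \sum_i\mathbf{p}_i=1,\ \mathbf{p}\cdot\mathbf{p}\le t\}$. *)

(* Defs.v *)
From mathcomp Require Import all_boot all_order all_algebra.
From mathcomp Require Import reals.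
Set Implicit Arguments. Unset Strict Implicit. Unset Printing Implicit Defensive.
Import Order.TTheory GRing.Theory Num.Theory.
Local Open Scope ring_scope.

Definition dotp (R : realType) (n : nat) (p q : 'I_n -> R) : R :=
  \sum_(i < n) p i * q i.

Definition simplex (R : realType) (n : nat) (p : 'I_n -> R) : Prop :=
  (forall i, 0 <= p i) /\ \sum_(i < n) p i = 1.

Definition Pset (R : realType) (n : nat) (t : R) (p : 'I_n -> R) : Prop :=
  simplex p /\ dotp p p <= t.

(* Main.v *)
Require Import Defs.
From mathcomp Require Import all_boot all_order all_algebra.
From mathcomp Require Import reals.
From mathcomp Require Import all_classical all_analysis.
From mathcomp Require Import ring lra.
Import Order.TTheory GRing.Theory Num.Theory.
Import numFieldNormedType.Exports.
Local Open Scope ring_scope.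

Section S.
Variable R : realType.

Lemma cert (n : nat) (q ps a : 'I_n -> R) (t s c Z : R) :
  0 < s -> 0 <= Z -> simplex ps -> dotp ps ps = t ->
  (forall i, s * q i = c + a i) -> (forall i, a i <= Z * ps i) ->
  (forall i, a i * ps i = Z * ps i ^+ 2) ->
  forall p, Pset t p -> dotp p q <= dotp ps q.
Proof.
move=> s0 Z0 [ps0 ps1] pst hq ha hb p [[p0 p1] ppt].
have E : forall r : 'I_n -> R, simplex r -> s * dotp r q = c + \sum_i r i * a i.
  move=> r [_ r1]; rewrite /dotp mulr_sumr.
  under eq_bigr => i _ do rewrite mulrCA hq mulrDr.
  by rewrite big_split /= -mulr_suml r1 mul1r.
have cs : 2 * dotp p ps <= t + t.
  have : 0 <= \sum_i (p i - ps i) ^+ 2 by apply: sumr_ge0 => i _; exact: sqr_ge0.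
  have -> : \sum_i (p i - ps i) ^+ 2 = dotp p p + dotp ps ps - 2 * dotp p ps.
    rewrite /dotp mulr_sumr -big_split /= -sumrB; apply: eq_bigr => i _; ring.
  lra.
rewrite -(ler_pM2l s0) (E p) ?(E ps) //; rewrite lerD2l.
have -> : \sum_i ps i * a i = Z * t.
  rewrite -pst /dotp mulr_sumr; apply: eq_bigr => i _; rewrite mulrC hb; ring.
apply: (@le_trans _ _ (Z * dotp p ps)).
  rewrite /dotp mulr_sumr; apply: ler_sum => i _.
  by rewrite mulrCA; apply: ler_wpM2l => //; rewrite mulrC.
apply: ler_wpM2l => //; lra.
Qed.


Lemma sum_if (n : nat) (j : 'I_n) (x : R) :
  \sum_(i < n) (if i == j then x else 0) = x.
Proof. by rewrite -big_mkcond big_pred1_eq. Qed.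

Lemma sum_ind_ge1 (n : nat) (q : 'I_n -> R) (j : 'I_n) :
  1 <= \sum_(i < n) ((q i == q j)%:R : R).
Proof.
rewrite (bigD1 j) //= eqxx; rewrite -{1}[1]addr0 lerD2l.
by apply: sumr_ge0 => i _; rewrite ler0n.
Qed.

End S.

Theorem lemma6 (R : realType) (n : nat) (q : 'I_n -> R) (t : R) :
  (2 <= n)%N -> n%:R^-1 < t -> t < 1 ->
  exists pstar : 'I_n -> R,
    [/\ Pset t pstar,
        dotp pstar pstar = t,
        (forall p, Pset t p -> dotp p q <= dotp pstar q) &
        (forall p, simplex p -> dotp p p = t -> dotp p q <= dotp pstar q)].
Proof.
move=> n2 tn t1.
have n0 : (0 < n)%N by apply: leq_trans n2.
pose i0 : 'I_n := Ordinal n0.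
have [j _ Hj] := @arg_maxP _ R 'I_n i0 xpredT q isT.
have Hq : forall i, q i <= q j by move=> i; exact: Hj.
clear Hj.
pose e i : R := (q i == q j)%:R.
pose m := \sum_i e i.
have m1 : 1 <= m by exact: sum_ind_ge1.
have m0 : 0 < m by lra.
suff [ps0 [Ps pst0 opt]] : exists ps, [/\ Pset t ps, dotp ps ps = t &
    forall p, Pset t p -> dotp p q <= dotp ps q].
  exists ps0; split => // p sp pt; apply: opt; split => //; rewrite pt. by [].
have [tm|tm] := ltP t m^-1.
-
  pose d i := q j - q i.
  have d0 : forall i, 0 <= d i by move=> i; rewrite /d subr_ge0.
  pose w s i := Num.max 0 (1 - s * d i).
  have w0 : forall s i, 0 <= w s i by move=> s i; rewrite /w le_max lexx.
  have wj : forall s, w s j = 1.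
    by move=> s; rewrite /w /d subrr mulr0 subr0; apply/max_idPr; lra.
  pose Z s := \sum_i w s i.
  have Z1 : forall s, 1 <= Z s.
    move=> s; rewrite /Z (bigD1 j) //= wj; rewrite -{1}[1]addr0 lerD2l.
    by apply: sumr_ge0 => i _.
  pose f s := (\sum_i w s i ^+ 2) / (Z s) ^+ 2.
  pose S := \sum_i (d i)^-1.
  have S0 : 0 <= S by apply: sumr_ge0 => i _; rewrite invr_ge0.
  have f0 : f 0 = n%:R^-1.
    have w0i : forall i, w 0 i = 1 by move=> i; rewrite /w mul0r subr0; apply/max_idPr; lra.
    rewrite /f /Z; under eq_bigr => i _ do rewrite w0i.
    under [X in _ / X ^+ 2]eq_bigr => i _ do rewrite w0i.
    rewrite expr1n !sumr_const card_ord.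
    have nn : n%:R != 0 :> R by rewrite pnatr_eq0 -lt0n.
    field; exact: nn.
  have fS : f S = m^-1.
    have wS : forall i, w S i = e i.
      move=> i; rewrite /w /e; case: eqP => [h|h].
        by rewrite /d h subrr mulr0 subr0; apply/max_idPr; lra.
      have dp : 0 < d i.
        rewrite lt_neqAle d0 andbT eq_sym /d subr_eq0; apply/eqP => h'; apply: h; by rewrite h'.
      have : (d i)^-1 <= S.
        rewrite /S (bigD1 i) //= -{1}[_^-1]addr0 lerD2l.
        by apply: sumr_ge0 => k _; rewrite invr_ge0.
      rewrite -(ler_pM2r dp) mulVf ?gt_eqF // => h1.
      by apply/max_idPl; lra.
    rewrite /f /Z; under eq_bigr => i _ do rewrite wS.
    under [X in _ / X ^+ 2]eq_bigr => i _ do rewrite wS.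
    have -> : \sum_i e i ^+ 2 = m.
      by apply: eq_bigr => i _; rewrite /e; case: (q i == q j); rewrite ?expr0n ?expr1n.
    by rewrite -/m; field; rewrite gt_eqF.
  have fc : continuous f.
    have cw : forall i, continuous (fun s => w s i).
      move=> i x.
      have h1 : {for x, continuous (fun _ : R => (0 : R^o))} by exact: cvg_cst.
      have h2 : {for x, continuous (fun s : R => (1 - s * d i : R^o))}.
        apply: continuousB; first exact: cvg_cst.
        have h3 : {for x, continuous (fun s : R => s)} by exact: cvg_id.
        have h4 : {for x, continuous (fun _ : R => d i)} by exact: cvg_cst.
        exact: (continuousM h3 h4).
      exact: (continuous_max h1 h2).
    have cZ : continuous Z.
      by apply: (continuous_big add_continuous) => i _; exact: cw.
    have cN : continuous (fun s => \sum_i w s i ^+ 2).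
      apply: (continuous_big add_continuous) => i _ x.
      exact: (continuousM (cw i x) (cw i x)).
    move=> x.
    have hz : Z x ^+ 2 != 0 by rewrite expf_neq0 // gt_eqF //; apply: lt_le_trans (Z1 x); lra.
    have h6 : {for x, continuous (fun y => Z y ^+ 2)} := continuousM (cZ x) (cZ x).
    have h5 := continuousV (s := fun y => Z y ^+ 2) hz h6.
    exact: (continuousM (cN x) h5).
  have [s sS fs] : exists2 s, s \in `[0, S] & f s = t.
    apply: IVT => //; first by apply: continuous_subspaceT.
    rewrite f0 fS; apply/andP; split.
      by rewrite ge_min; apply/orP; left; lra.
    by rewrite le_max; apply/orP; right; lra.
  have s0 : 0 < s.
    move: sS; rewrite in_itv /= => /andP [h _]; rewrite lt_neqAle h andbT.
    by apply/eqP => h'; move: fs; rewrite -h' f0 => h''; move: tn; rewrite h''; lra.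
  have Zs0 : Z s != 0 by rewrite gt_eqF //; apply: lt_le_trans (Z1 s); lra.
  pose ps i := w s i / Z s.
  have hsp : simplex ps.
    split; first by move=> i; apply: divr_ge0 => //; apply: le_trans (Z1 s); lra.
    by rewrite /ps -mulr_suml divff.
  have pst : dotp ps ps = t.
    rewrite -fs /dotp /f /ps mulr_suml; apply: eq_bigr => i _; field; exact: Zs0.
  exists ps; split => //; first by split => //; rewrite pst.
  apply: (@cert R n q ps (fun i => 1 - s * d i) t s (s * q j - 1) (Z s)) => //.
  + by apply: le_trans (Z1 s); lra.
  + by move=> i; rewrite /d; ring.
  + by move=> i; rewrite /ps mulrCA divff // mulr1 /w le_max lexx orbT.
  + move=> i; rewrite /ps.
    have aw : (1 - s * d i) * w s i = w s i ^+ 2.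
      rewrite /w; move: (1 - s * d i) => a.
      rewrite /Order.max; case: ifP => h.
        by rewrite expr2.
      by rewrite mulr0 expr0n.
    rewrite mulrA aw; field; exact: Zs0.
-
  have m1' : 1 < m.
    rewrite ltNge; apply/negP => mle.
    have : m = 1 by apply/eqP; rewrite eq_le mle m1.
    move=> m_1; move: tm; rewrite m_1 invr1; lra.
  have im : 0 < m^-1 < 1 by rewrite invr_gt0 m0 /= invf_lt1.
  pose x := (t - m^-1) / (1 - m^-1).
  have x0 : 0 <= x by apply: divr_ge0; lra.
  have x1 : x <= 1 by rewrite ler_pdivrMr; lra.
  pose r := Num.sqrt x.
  have r0 : 0 <= r by exact: sqrtr_ge0.
  have r2 : r ^+ 2 = x by exact: sqr_sqrtr.
  have r1 : r <= 1.
    by rewrite -sqrtr1; apply: ler_wsqrtr.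
  pose ps i := (1 - r) * e i / m + (if i == j then r else 0).
  have e01 : forall i, e i = 0 \/ e i = 1.
    by move=> i; rewrite /e; case: (q i == q j); [right|left].
  have ej : e j = 1 by rewrite /e eqxx.
  have psum : \sum_i ps i = 1.
    rewrite big_split /= sum_if -mulr_suml -mulr_sumr -/m.
    by rewrite -mulrA divff ?mulr1 ?gt_eqF // subrK.


  have psnn : forall i, 0 <= ps i.
    move=> i; rewrite /ps; apply: addr_ge0.
      apply: divr_ge0; last lra.
      by apply: mulr_ge0; [lra | case: (e01 i) => ->; lra].
    by case: (i == j).
  have psq : forall i, ps i * ps i =
     ((1 - r) / m) ^+ 2 * e i + (if i == j then 2 * ((1 - r) / m) * r + r ^+ 2 else 0).
    move=> i; rewrite /ps; case: eqP => [->|_]; first by rewrite ej; ring.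
    by case: (e01 i) => ->; ring.
  have pst : dotp ps ps = t.
    rewrite /dotp; under eq_bigr => i _ do rewrite psq.
    rewrite big_split /= sum_if -mulr_sumr -/m.
    have mne : m != 0 by rewrite gt_eqF.
    have hne : 1 - m^-1 != 0 by rewrite subr_eq0 eq_sym; apply/negP => /eqP h; move: im; rewrite h; lra.
    have -> : ((1 - r) / m) ^+ 2 * m + (2 * ((1 - r) / m) * r + r ^+ 2) =
              (1 - r ^+ 2) / m + r ^+ 2 by field.
    rewrite r2 /x; field.
    by rewrite mne /= subr_eq0 gt_eqF.
  have hsp : simplex ps by [].
  exists ps; split => //; first by split => //; rewrite pst.
  apply: (@cert R n q ps (fun i => q i - q j) t 1 (q j) 0) => //.
  + by move=> i; rewrite mul1r; ring.
  + by move=> i; rewrite mul0r subr_le0.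
  + move=> i; rewrite mul0r /ps.
    case: (eqVneq (q i) (q j)) => [->|h]; first by rewrite subrr mul0r.
    have -> : e i = 0 by rewrite /e (negbTE h).
    have -> : (i == j) = false by apply/negbTE; apply: contraNneq h => ->.
    by rewrite mulr0 mul0r add0r mulr0.
Qed.
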